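(* Assume $L/F$ is ramified. If $\Phi\in\pi_{\tau,\chi}^{K_n}$ with $n\ge1$, then $\operatorname{supp}(\Phi)\subset\mathfrak p_L^{c-n}$ and $\Phi$ is constant on cosets of $\mathfrak p_L^{c+n-1}$.
   Context: $F$ is a $p$-adic field with $p\ne2$, ring of integers $\mathcal O$ with maximal ideal $\mathfrak p$, residue field of order $q$. $L/F$ is a quadratic extension with ring of integers $\mathcal O_L$, maximal ideal $\mathfrak p_L$, conjugation $x\mapsto\overline x$, norm $N:L\to F$, $L^1=\ker N$; $\omega$ is the nontrivial character of $F^\times/N(L^\times)$. $\chi$ is a character of $L^\times$ not factoring through $N$. $\tau$ is a nontrivial additive character of $F$ with conductor $\mathfrak p^c$, i.e. $\tau$ is trivial on $\mathfrak p^m$ iff $m\ge c$. Put $\langle x,y\rangle=\tau(\operatorname{tr}_{L/F}(xy))$ and $\widehat\Phi(x)=\int_L\Phi(y)\langle x,y\rangle\,dy$ for Schwartz functions $\Phi$ on $L$, with Haar measure normalized so that $\widehat{\widehat\Phi}(x)=\Phi(-x)$. $\mathcal S(L)_\chi$ is the space of Schwartz functions with $\Phi(xy)=\chi(y)^{-1}\Phi(x)$ for $y\in L^1$. $G_+=\{g\in GL_2(F):\det g\in N(L^\times)\}$, and $\pi_{\tau,\chi}$ is the irreducible representation of $G_+$ on $\mathcal S(L)_\chi$ satisfying $\pi_{\tau,\chi}\begin{pmatrix}1&u\\0&1\end{pmatrix}\Phi(x)=\tau(uN(x))\Phi(x)$, $\pi_{\tau,\chi}\begin{pmatrix}a&0\\0&a^{-1}\end{pmatrix}\Phi(x)=\omega(a)|a|_L^{1/2}\Phi(ax)$,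 $\pi_{\tau,\chi}\begin{pmatrix}0&1\\-1&0\end{pmatrix}\Phi(x)=\gamma\widehat\Phi(\overline x)$ for some complex $\gamma$ with $|\gamma|=1$. $K_n$ is the principal congruence subgroup of $GL_2(F)$ of level $n$ (contained in $G_+$ for $n\ge1$). *)

(* Defs.v *)
From HB Require Import structures.
From mathcomp Require Import all_boot all_order all_algebra complex.
From mathcomp Require Import reals.
Set Implicit Arguments. Unset Strict Implicit. Unset Printing Implicit Defensive.
Import Order.TTheory GRing.Theory Num.Theory.
Local Open Scope ring_scope.

(* Discrete valuations.  [v : K -> int] is only meaningful on nonzero   *)
(* elements; the value [v 0] is irrelevant.                             *)

Definition in_ideal (K : fieldType) (v : K -> int) (m : int) (x : K) : Prop :=
  x = 0 \/ (m <= v x)%R.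

Definition is_normalized_dval (K : fieldType) (v : K -> int) : Prop :=
  [/\ forall x y : K, x != 0 -> y != 0 -> v (x * y) = v x + v y,
      forall x y : K, x != 0 -> y != 0 -> x + y != 0 ->
                      Num.min (v x) (v y) <= v (x + y)
    & exists pi : K, pi != 0 /\ v pi = 1].

(* F, with its normalized valuation v, is a p-adic field (a finite extension
   of Q_p, i.e. a complete discretely valued field of characteristic 0 with
   finite residue field) whose residue field has exactly q elements and has
   characteristic different from 2. *)
Definition is_padic_field (F : fieldType) (v : F -> int) (q : nat) : Prop :=
  [/\ is_normalized_dval v,
      [pchar F] =i pred0,
      (* residue field O/p has exactly q elements *)
      (exists r : seq F,
         [/\ size r = q, uniq r,
             forall x, x \in r -> in_ideal v 0 x,
             forall x y, x \in r -> y \in r -> x != y -> ~ in_ideal v 1 (x - y)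
           & forall x, in_ideal v 0 x -> exists2 y, y \in r & in_ideal v 1 (x - y)]),
      (forall u : nat -> F,
         (forall k : int, exists N, forall m n, (N <= m)%N -> (N <= n)%N ->
                                   in_ideal v k (u m - u n)) ->
         exists l : F, forall k : int, exists N, forall n, (N <= n)%N ->
                                   in_ideal v k (u n - l))
    & (* residue characteristic p <> 2, i.e. 2 is a unit of O *)
      v 2%:R = 0].

(* L is a quadratic extension of F via the embedding iota, with nontrivial
   Galois conjugation sigma (an involutive field automorphism of L, different
   from the identity, whose fixed field is exactly iota(F)); trF and nrmF are
   the trace and norm L -> F. *)
Definition is_quadratic_ext (F L : fieldType) (iota : {rmorphism F -> L})
  (sigma : {rmorphism L -> L}) (trF nrmF : L -> F) : Prop :=
  [/\ forall x, sigma (sigma x) = x,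
      exists x, sigma x != x,
      forall x, sigma x = x <-> exists a, x = iota a,
      forall x, iota (trF x) = x + sigma x
    & forall x, iota (nrmF x) = x * sigma x].

(* vL is the normalized valuation of L extending (a multiple of) vF, and L/F
   is ramified: vL (iota a) = 2 * vF a (ramification index 2). *)
Definition ramified_ext_valuation (F L : fieldType) (iota : {rmorphism F -> L})
  (vF : F -> int) (vL : L -> int) : Prop :=
  is_normalized_dval vL /\ forall a, a != 0 -> vL (iota a) = 2%:Z * vF a.

Section Weil.
Variables (R : realType) (F L : fieldType).
Local Notation C := (R[i]).

(* Schwartz (locally constant, compactly supported) functions on L. *)
Definition schwartz (vL : L -> int) (Phi : L -> C) : Prop :=
  exists m : int,
    (forall x, Phi x != 0 -> in_ideal vL (- m) x) /\
    (forall x y, in_ideal vL m y -> Phi (x + y) = Phi x).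

Definition schwartz_chi (vL : L -> int) (nrmF : L -> F) (chi : L -> C)
  (Phi : L -> C) : Prop :=
  schwartz vL Phi /\
  forall x y, nrmF y = 1 -> Phi (x * y) = (chi y)^-1 * Phi x.

Definition haar_integral (vL : L -> int) (I : (L -> C) -> C) : Prop :=
  [/\ forall Phi Psi, schwartz vL Phi -> schwartz vL Psi ->
        I (fun x => Phi x + Psi x) = I Phi + I Psi,
      forall (k : C) Phi, schwartz vL Phi -> I (fun x => k * Phi x) = k * I Phi,
      forall Phi a, schwartz vL Phi -> I (fun x => Phi (x + a)) = I Phi
    & forall Phi, schwartz vL Phi -> (forall x, 0 <= Phi x) -> 0 <= I Phi].

Definition fourier (I : (L -> C) -> C) (tau : F -> C) (trF : L -> F)
  (Phi : L -> C) : L -> C :=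
  fun x => I (fun y => Phi y * tau (trF (x * y))).

Definition additive_char_conductor (vF : F -> int) (tau : F -> C) (c : int) : Prop :=
  [/\ forall a b, tau (a + b) = tau a * tau b,
      forall a, `|tau a| = 1
    & forall m : int, (forall a, in_ideal vF m a -> tau a = 1) <-> c <= m].

Definition char_not_via_norm (vL : L -> int) (nrmF : L -> F) (chi : L -> C) : Prop :=
  [/\ forall x y, x != 0 -> y != 0 -> chi (x * y) = chi x * chi y,
      forall x, x != 0 -> chi x != 0,
      (exists m : int, (0 < m)%R /\ forall x, in_ideal vL m (x - 1) -> chi x = 1)
    & ~ exists eta : F -> C, forall x, x != 0 -> chi x = eta (nrmF x)].

Definition norm_residue_char (nrmF : L -> F) (omega : F -> C) : Prop :=
  forall a : F, a != 0 ->
    ((exists y, y != 0 /\ nrmF y = a) -> omega a = 1) /\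
    (~ (exists y, y != 0 /\ nrmF y = a) -> omega a = -1).

End Weil.

Definition mx22 (K : ringType) (a b c d : K) : 'M[K]_2 :=
  \matrix_(i < 2, j < 2)
    if (i == 0 :> nat) then (if (j == 0 :> nat) then a else b)
    else (if (j == 0 :> nat) then c else d).

Definition in_Gplus (F L : fieldType) (nrmF : L -> F) (g : 'M[F]_2) : Prop :=
  exists y : L, y != 0 /\ nrmF y = \det g.

Definition in_Kn (F : fieldType) (vF : F -> int) (n : int) (g : 'M[F]_2) : Prop :=
  forall i j : 'I_2, in_ideal vF n (g i j - (i == j)%:R).

Section Rep.
Variables (R : realType) (F L : fieldType).
Local Notation C := (R[i]).

Definition is_irrep_Gplus (vL : L -> int) (nrmF : L -> F) (chi : L -> C)
  (pi : 'M[F]_2 -> (L -> C) -> (L -> C)) : Prop :=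
  let S := schwartz_chi vL nrmF chi in
  [/\ forall g Phi, in_Gplus nrmF g -> S Phi -> S (pi g Phi),
      forall g Phi Psi (k : C), in_Gplus nrmF g -> S Phi -> S Psi ->
        pi g (fun x => k * Phi x + Psi x) = (fun x => k * pi g Phi x + pi g Psi x),
      forall Phi, S Phi -> pi 1%:M Phi = Phi,
      forall g h Phi, in_Gplus nrmF g -> in_Gplus nrmF h -> S Phi ->
        pi (g *m h) Phi = pi g (pi h Phi)
    &
      (exists Phi, S Phi /\ Phi <> (fun _ => 0)) /\
      forall W : (L -> C) -> Prop,
        (forall Phi, W Phi -> S Phi) ->
        W (fun _ => 0) ->
        (forall Phi Psi (k : C), W Phi -> W Psi -> W (fun x => k * Phi x + Psi x)) ->
        (forall g Phi, in_Gplus nrmF g -> W Phi -> W (pi g Phi)) ->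
        (forall Phi, W Phi -> Phi = (fun _ => 0)) \/ (forall Phi, S Phi -> W Phi)].

End Rep.

(* Main.v *)
Require Import Defs.
From HB Require Import structures.
From mathcomp Require Import all_boot all_order all_algebra complex.
From mathcomp Require Import reals.
From mathcomp Require Import zify ring lra.
From Stdlib Require Import FunctionalExtensionality.
Import Order.TTheory GRing.Theory Num.Theory.
Local Open Scope ring_scope.

Lemma det_mx22 (K : fieldType) (a b c d : K) : \det (mx22 a b c d) = a * d - b * c.
Proof.
rewrite (expand_det_row _ 0) !big_ord_recl big_ord0 /cofactor.
rewrite !det_mx11 !mxE /=.
rewrite /bump /= expr0 expr1 addr0 mul1r mulN1r mulrN.
by [].
Qed.

Section V.
Variables (K : fieldType) (v : K -> int).
Hypothesis hv : is_normalized_dval v.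

Lemma vM {x y} : x != 0 -> y != 0 -> v (x * y) = v x + v y.
Proof. by case: hv => h _ _; apply: h. Qed.

Lemma vmin {x y} : x != 0 -> y != 0 -> x + y != 0 -> (v x <= v (x + y)) || (v y <= v (x + y)).
Proof. by case: hv => _ h _ hx hy hxy; rewrite -ge_min; apply: h. Qed.

Lemma v1 : v 1 = 0.
Proof. have := vM (oner_neq0 K) (oner_neq0 K). rewrite mulr1 => h. have h' : v 1 = v 1 + v 1 by exact: h. lia. Qed.

Lemma vN1 : v (-1) = 0.
Proof.
have h1 : (-1 : K) != 0 by rewrite oppr_eq0 oner_neq0.
have := vM h1 h1. rewrite mulrNN mulr1 v1 => h. have h' : 0 = v (-1) + v (-1) by exact: h. lia. Qed.

Lemma vN x : x != 0 -> v (- x) = v x.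
Proof.
move=> hx; have h1 : (-1 : K) != 0 by rewrite oppr_eq0 oner_neq0.
by rewrite -mulN1r vM // vN1 add0r.
Qed.

Lemma vV x : x != 0 -> v (x^-1) = - v x.
Proof.
move=> hx; have := vM hx (invr_neq0 hx); rewrite mulfV // v1. lia.
Qed.

Lemma vstrict {x y} : x != 0 -> y != 0 -> v x < v y -> x + y != 0 /\ v (x + y) = v x.
Proof.
move=> hx hy lt.
have hxy : x + y != 0.
  apply/negP => /eqP e. have : y = - x by apply/eqP; rewrite -subr_eq0 opprK addrC e.
  move=> ey; move: lt; rewrite ey vN //; lia.
split => //.
have h1 := vmin hx hy hxy.
have hy' : - y != 0 by rewrite oppr_eq0.
have e : x + y + - y != 0 by rewrite addrK.
have h2 := vmin hxy hy' e.
rewrite addrK vN // in h2.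
case/orP: h1 => h1; case/orP: h2 => h2; lia.
Qed.

Lemma vneq {x y} : x != 0 -> y != 0 -> v x != v y -> x + y != 0 /\
  ((v (x + y) = v x /\ v x < v y) \/ (v (x + y) = v y /\ v y < v x)).
Proof.
move=> hx hy ne.
case: (ltgtP (v x) (v y)) ne => // lt _.
  by have [h1 h2] := vstrict hx hy lt; split => //; left.
by have [h1 h2] := vstrict hy hx lt; rewrite addrC; split => //; right.
Qed.

Lemma in_ideal_mul m k a b : in_ideal v m a -> in_ideal v k b -> in_ideal v (m + k) (a * b).
Proof.
case=> [->|ha]; first by left; rewrite mul0r.
case=> [->|hb]; first by left; rewrite mulr0.
case: (eqVneq a 0) => [->|a0]; first by left; rewrite mul0r.
case: (eqVneq b 0) => [->|b0]; first by left; rewrite mulr0.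
right; rewrite vM //; lia.
Qed.

Lemma in_ideal_add m a b : in_ideal v m a -> in_ideal v m b -> in_ideal v m (a + b).
Proof.
case=> [->|ha]; first by rewrite add0r.
case=> [->|hb]; first by rewrite addr0; right.
case: (eqVneq a 0) => [->|a0]; first by rewrite add0r; right.
case: (eqVneq b 0) => [->|b0]; first by rewrite addr0; right.
case: (eqVneq (a+b) 0) => [->|ab0]; first by left.
right; case/orP: (vmin a0 b0 ab0) => h; [exact: le_trans ha h|exact: le_trans hb h].
Qed.

Lemma in_ideal_opp m a : in_ideal v m a -> in_ideal v m (- a).
Proof.
case=> [->|ha]; first by left; rewrite oppr0.
case: (eqVneq a 0) => [->|a0]; first by left; rewrite oppr0.
by right; rewrite vN.
Qed.

Lemma in_ideal_le m k a : k <= m -> in_ideal v m a -> in_ideal v k a.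
Proof. by move=> le [->|h]; [left|right; lia]. Qed.

End V.
Arguments vM {K v} hv {x y}.
Arguments vmin {K v} hv {x y}.
Arguments v1 {K v} hv.
Arguments vN1 {K v} hv.
Arguments vN {K v} hv {x}.
Arguments vV {K v} hv {x}.
Arguments vstrict {K v} hv {x y}.
Arguments vneq {K v} hv {x y}.
Arguments in_ideal_mul {K v} hv {m k a b}.
Arguments in_ideal_add {K v} hv {m a b}.
Arguments in_ideal_opp {K v} hv {m a}.
Arguments in_ideal_le {K v} {m k a}.

Section Q.
Variables (F L : fieldType) (iota : {rmorphism F -> L}) (sigma : {rmorphism L -> L})
  (trF nrmF : L -> F) (vF : F -> int) (vL : L -> int).
Hypothesis hL : is_quadratic_ext iota sigma trF nrmF.
Hypothesis hvF : is_normalized_dval vF.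
Hypothesis hram : ramified_ext_valuation iota vF vL.

Let hvL : is_normalized_dval vL. Proof. by case: hram. Qed.
Let iota_inj := fmorph_inj iota.
Let sig_inj := fmorph_inj sigma.
Let sigK x : sigma (sigma x) = x. Proof. by case: hL. Qed.
Let fixP x : sigma x = x <-> exists a, x = iota a. Proof. by case: hL. Qed.
Let htr x : iota (trF x) = x + sigma x. Proof. by case: hL. Qed.
Let hnrm x : iota (nrmF x) = x * sigma x. Proof. by case: hL. Qed.

Lemma sig_iota a : sigma (iota a) = iota a.
Proof. by apply/fixP; exists a. Qed.

Lemma tr_add x y : trF (x + y) = trF x + trF y.
Proof. apply: iota_inj; rewrite rmorphD !htr rmorphD; ring. Qed.

Lemma tr_scal a x : trF (iota a * x) = a * trF x.
Proof. apply: iota_inj; rewrite rmorphM !htr rmorphM sig_iota; ring. Qed.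

Lemma tr_iota a : trF (iota a) = a + a.
Proof. apply: iota_inj; rewrite rmorphD !htr sig_iota. by []. Qed.

Lemma nrm_nz {x} : x != 0 -> nrmF x != 0.
Proof.
move=> hx; apply/negP => /eqP e.
have : iota (nrmF x) = 0 by rewrite e rmorph0.
rewrite hnrm => /eqP; rewrite mulf_eq0 (negbTE hx) /= => /eqP.
by move/(f_equal sigma); rewrite sigK rmorph0 => /eqP; rewrite (negbTE hx).
Qed.

Lemma vLi {a} : a != 0 -> vL (iota a) = 2%:Z * vF a.
Proof. by case: hram => _ h; apply: h. Qed.

Lemma iota_nz {a} : a != 0 -> iota a != 0.
Proof. by rewrite fmorph_eq0. Qed.


Lemma parity (a b : int) : 2%:Z * a <> 2%:Z * b + 1.
Proof. lia. Qed.

Lemma unif : exists p, [/\ p != 0, vL p = 1, vF (nrmF p) = 1, in_ideal vF 1 (trF p)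
   & vL (sigma p) = 1].
Proof.
case: hvL => _ _ [p [p0 vp]].
have N0 := nrm_nz p0.
have iN0 := iota_nz N0.
have pp0 : p * p != 0 by rewrite mulf_neq0.
have vpp : vL (p * p) = 2 by rewrite (vM hvL) // vp.
have viN := vLi N0.
have e : p * p + iota (nrmF p) = iota (trF p) * p by rewrite hnrm htr; ring.
have vN1 : vF (nrmF p) = 1.
  case: (eqVneq (trF p) 0) => [t0|t0].
    move: e; rewrite t0 rmorph0 mul0r => /eqP; rewrite addr_eq0 => /eqP e.
    move: vpp; rewrite e (vN hvL) // viN => h. lia.
  have it0 := iota_nz t0.
  have vr : vL (iota (trF p) * p) = 2%:Z * vF (trF p) + 1 by rewrite (vM hvL) // vLi // vp.
  case: (eqVneq (vL (p * p)) (vL (iota (nrmF p)))) => [h|h].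
    move: h; rewrite vpp viN => h. lia.
  have [_ [[h1 _]|[h1 _]]] := vneq hvL pp0 iN0 h; move: h1; rewrite e vr ?vpp ?viN => h1.
    lia.
  lia.
exists p; split => //.
- case: (eqVneq (trF p) 0) => [->|t0]; first by left.
  right. have it0 := iota_nz t0.
  have vr : vL (iota (trF p) * p) = 2%:Z * vF (trF p) + 1 by rewrite (vM hvL) // vLi // vp.
  have s0 : p * p + iota (nrmF p) != 0 by rewrite e mulf_neq0.
  case/orP: (vmin hvL pp0 iN0 s0); rewrite e vr ?vpp ?viN ?vN1 => h; lia.
- have sp0 : sigma p != 0 by rewrite fmorph_eq0.
  move: viN; rewrite hnrm (vM hvL) // vp vN1 => h. lia.
Qed.


Lemma decomp {p} : p != 0 -> vL p = 1 -> forall x, exists a b, x = iota a + iota b * p.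
Proof.
move=> p0 vp x.
have d0 : p - sigma p != 0.
  rewrite subr_eq0; apply/negP => /eqP e.
  have [a ea] := (fixP p).1 (esym e).
  have a0 : a != 0 by apply: contra p0; rewrite ea => /eqP ->; rewrite rmorph0.
  move: vp; rewrite ea vLi // => h; lia.
set w := (x - sigma x) / (p - sigma p).
have [b eb] : exists b, w = iota b.
  apply/fixP; rewrite /w fmorph_div !rmorphB !sigK.
  by rewrite -mulrNN -invrN !opprB.
set y := x - iota b * p.
have [a ea] : exists a, y = iota a.
  apply/fixP; rewrite /y rmorphB rmorphM sig_iota -eb.
  apply/eqP; rewrite -subr_eq0.
  have -> : sigma x - w * sigma p - (x - w * p) = - ((x - sigma x) - w * (p - sigma p)) by ring.
  by rewrite /w divfK // subrr oppr0.
exists a, b; rewrite -ea /y; ring.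
Qed.

Lemma val_ab {p a b} : vL p = 1 -> p != 0 -> a != 0 -> b != 0 ->
  iota a + iota b * p != 0 /\
  ((vL (iota a + iota b * p) = 2%:Z * vF a /\ 2%:Z * vF a < 2%:Z * vF b + 1) \/
   (vL (iota a + iota b * p) = 2%:Z * vF b + 1 /\ 2%:Z * vF b + 1 < 2%:Z * vF a)).
Proof.
move=> vp p0 a0 b0.
have ia := iota_nz a0; have ib := iota_nz b0.
have bp0 : iota b * p != 0 by rewrite mulf_neq0.
have vbp : vL (iota b * p) = 2%:Z * vF b + 1 by rewrite (vM hvL) // vLi // vp.
have ne : vL (iota a) != vL (iota b * p) by rewrite vLi // vbp; apply/eqP; lia.
have [s0 [[h1 h2]|[h1 h2]]] := vneq hvL ia bp0 ne; split => //.
  by left; move: h1 h2; rewrite vLi // vbp.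
by right; move: h1 h2; rewrite vLi // vbp.
Qed.

Lemma vL_sigma x : x != 0 -> vL (sigma x) = vL x.
Proof.
move=> x0.
have [p [p0 vp _ _ vsp]] := unif.
have sp0 : sigma p != 0 by rewrite fmorph_eq0.
have [a [b ex]] := decomp p0 vp x.
have esx : sigma x = iota a + iota b * sigma p by rewrite ex rmorphD rmorphM !sig_iota.
rewrite esx ex.
case: (eqVneq a 0) => [a0|a0].
  have b0 : b != 0 by apply: contra x0; rewrite ex a0 => /eqP ->; rewrite !rmorph0 add0r mul0r.
  rewrite a0 rmorph0 !add0r !(vM hvL) ?iota_nz //. by rewrite vp vsp.
case: (eqVneq b 0) => [->|b0]; first by rewrite rmorph0 !mul0r.
have [_ h1] := val_ab vp p0 a0 b0.
have [_ h2] := val_ab vsp sp0 a0 b0.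
case: h1 => [[-> ?]|[-> ?]]; case: h2 => [[-> ?]|[-> ?]]; lia.
Qed.

Lemma vL_nrm x : x != 0 -> vF (nrmF x) = vL x.
Proof.
move=> x0.
have sx0 : sigma x != 0 by rewrite fmorph_eq0.
have := vLi (nrm_nz x0); rewrite hnrm (vM hvL) // vL_sigma // => h. lia.
Qed.

Lemma tr_ideal c z : in_ideal vL (2%:Z * c - 1) z -> in_ideal vF c (trF z).
Proof.
move=> hz.
have [p [p0 vp vN1 ht _]] := unif.
have [a [b ez]] := decomp p0 vp z.
have [ha hb] : in_ideal vL (2%:Z * c - 1) (iota a) /\ in_ideal vL (2%:Z * c - 1) (iota b * p).
  case: (eqVneq a 0) => [a0|a0].
    by rewrite ez a0 rmorph0 add0r in hz; split; [left; rewrite a0 rmorph0|exact: hz].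
  case: (eqVneq b 0) => [b0|b0].
    by rewrite ez b0 rmorph0 mul0r addr0 in hz; split; [exact: hz|left; rewrite b0 rmorph0 mul0r].
  have [s0 h] := val_ab vp p0 a0 b0.
  case: hz; first by rewrite ez => e; move: s0; rewrite e eqxx.
  rewrite -ez in h.
  have vbp : vL (iota b * p) = 2%:Z * vF b + 1 by rewrite (vM hvL) ?iota_nz // vLi // vp.
  move=> hz; split; right; rewrite ?vLi ?vbp //; case: h => [[e ?]|[e ?]]; rewrite e in hz; lia.
have ha' : in_ideal vF c a.
  case: (eqVneq a 0) => [->|a0]; first by left.
  case: ha => [/eqP|]; first by rewrite fmorph_eq0 (negbTE a0).
  rewrite vLi // => h; right; lia.
have hb' : in_ideal vF (c - 1) b.
  case: (eqVneq b 0) => [->|b0]; first by left.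
  case: hb => [/eqP|]; first by rewrite mulf_eq0 fmorph_eq0 (negbTE b0) (negbTE p0).
  rewrite (vM hvL) ?iota_nz // vLi // vp => h; right; lia.
rewrite ez tr_add tr_iota tr_scal mulrC.
apply: (in_ideal_add hvF) => //; first by apply: (in_ideal_add hvF).
have := in_ideal_mul hvF ht hb'.
by have -> : 1 + (c - 1) = c by lia.
Qed.

End Q.
Arguments vL_sigma {F L iota sigma trF nrmF vF vL}.
Arguments vL_nrm {F L iota sigma trF nrmF vF vL}.
Arguments tr_ideal {F L iota sigma trF nrmF vF vL}.
Arguments tr_add {F L iota sigma trF nrmF}.
Arguments sig_iota {F L iota sigma trF nrmF}.
Arguments nrm_nz {F L iota sigma trF nrmF}.

Lemma mx_comm (K : fieldType) (u : K) :
  mx22 1 u 0 1 *m mx22 0 1 (-1) 0 = mx22 0 1 (-1) 0 *m mx22 1 0 (-u) 1.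
Proof.
apply/matrixP => i j; rewrite !mxE !big_ord_recl !big_ord0 !mxE /=.
case: i => [[|[|i]] hi] //; case: j => [[|[|j]] hj] //= ; rewrite ?mxE /=; ring.
Qed.

Lemma Kn_up (F : fieldType) (vF : F -> int) n u : in_ideal vF n u -> in_Kn vF n (mx22 1 u 0 1).
Proof.
move=> hu i j; rewrite mxE.
case: i => [[|[|i]] hi] //; case: j => [[|[|j]] hj] //=; rewrite ?subrr ?subr0; by [left|].
Qed.

Lemma Kn_low (F : fieldType) (vF : F -> int) n u : in_ideal vF n u -> in_Kn vF n (mx22 1 0 u 1).
Proof.
move=> hu i j; rewrite mxE.
case: i => [[|[|i]] hi] //; case: j => [[|[|j]] hj] //=; rewrite ?subrr ?subr0; by [left|].
Qed.

Theorem lemma8p4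
  (R : realType) (F L : fieldType)
  (vF : F -> int) (q : nat) (hF : is_padic_field vF q)
  (iota : {rmorphism F -> L}) (sigma : {rmorphism L -> L}) (trF nrmF : L -> F)
  (hL : is_quadratic_ext iota sigma trF nrmF)
  (vL : L -> int) (hram : ramified_ext_valuation iota vF vL)
  (omega : F -> R[i]) (homega : norm_residue_char nrmF omega)
  (chi : L -> R[i]) (hchi : char_not_via_norm vL nrmF chi)
  (tau : F -> R[i]) (c : int) (htau : additive_char_conductor vF tau c)
  (I : (L -> R[i]) -> R[i]) (hI : haar_integral vL I)
  (hselfdual : forall Phi, schwartz vL Phi -> forall x,
      fourier I tau trF (fourier I tau trF Phi) x = Phi (- x))
  (gamma : R[i]) (hgamma : `|gamma| = 1)
  (pi : 'M[F]_2 -> (L -> R[i]) -> (L -> R[i]))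
  (hpi : is_irrep_Gplus vL nrmF chi pi)
  (hpi_n : forall u Phi, schwartz_chi vL nrmF chi Phi ->
      pi (mx22 1 u 0 1) Phi = (fun x => tau (u * nrmF x) * Phi x))
  (hpi_a : forall a Phi, a != 0 -> schwartz_chi vL nrmF chi Phi ->
      pi (mx22 a 0 0 a^-1) Phi =
      (fun x => omega a * (q%:R : R[i]) ^ (- vF a) * Phi (iota a * x)))
  (hpi_w : forall Phi, schwartz_chi vL nrmF chi Phi ->
      pi (mx22 0 1 (-1) 0) Phi = (fun x => gamma * fourier I tau trF Phi (sigma x)))
  (n : int) (hn : 1 <= n)
  (Phi : L -> R[i]) (hPhi : schwartz_chi vL nrmF chi Phi)
  (hfix : forall k, in_Kn vF n k -> pi k Phi = Phi) :
  (forall x, Phi x != 0 -> in_ideal vL (c - n) x) /\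
  (forall x y, in_ideal vL (c + n - 1) y -> Phi (x + y) = Phi x).
Proof.
have hvF : is_normalized_dval vF by case: hF.
have hvL : is_normalized_dval vL by case: hram.
have hnrm : forall x, iota (nrmF x) = x * sigma x by case: hL.
have sigK : forall x, sigma (sigma x) = x by case: hL.
case: hpi => hS _ _ hcomp _.
case: htau => tauD taun tauc.
have nrm1 : nrmF 1 = 1 by apply: (fmorph_inj iota); rewrite hnrm !rmorph1 mulr1.
have Gp : forall g, \det g = 1 -> in_Gplus nrmF g.
  by move=> g dg; exists 1; rewrite oner_neq0 nrm1 dg.
have detn (u : F) : \det (mx22 1 u 0 1) = 1 by rewrite det_mx22; ring.
have detl (u : F) : \det (mx22 1 0 u 1) = 1 by rewrite det_mx22; ring.
have detw : \det (mx22 (0 : F) 1 (-1) 0) = 1 by rewrite det_mx22; ring.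
have tau1 : forall a, in_ideal vF c a -> tau a = 1 by apply/(tauc c).2.
have P1 : forall Psi, schwartz_chi vL nrmF chi Psi ->
    (forall u, in_ideal vF n u -> pi (mx22 1 u 0 1) Psi = Psi) ->
    forall x, Psi x != 0 -> in_ideal vL (c - n) x.
  move=> Psi hPsi hfixP x hx.
  case: (eqVneq x 0) => [->|x0]; first by left.
  right; rewrite -(vL_nrm hL hram _ x0).
  have N0 := nrm_nz hL _ x0.
  have htu : forall u, in_ideal vF n u -> tau (u * nrmF x) = 1.
    move=> u hu; have := f_equal (fun f => f x) (hpi_n u Psi hPsi); rewrite hfixP //= => e.
    by apply: (mulIf hx); rewrite mul1r -e.
  suff : c <= n + vF (nrmF x) by lia.
  apply/(tauc _).1 => a ha.
  case: (eqVneq a 0) => [->|a0].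
    by have := htu 0 (or_introl erefl); rewrite mul0r.
  have := htu (a / nrmF x); rewrite divfK //; apply.
  right; rewrite (vM hvF) ?invr_neq0 // (vV hvF) //.
  by case: ha => [e|h]; [move: a0; rewrite e eqxx|lia].
split.
  apply: P1 => // u hu; apply: hfix; exact: Kn_up.
set Psi := pi (mx22 0 1 (-1) 0) Phi.
have hPsi : schwartz_chi vL nrmF chi Psi by apply: hS => //; apply: Gp.
have hfixPsi : forall u, in_ideal vF n u -> pi (mx22 1 u 0 1) Psi = Psi.
  move=> u hu.
  have Gw : in_Gplus nrmF (mx22 0 1 (-1) 0) by apply: Gp.
  have Gn : in_Gplus nrmF (mx22 1 u 0 1) by apply: Gp.
  have Gl : in_Gplus nrmF (mx22 1 0 (-u) 1) by apply: Gp.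
  have Kl : in_Kn vF n (mx22 1 0 (-u) 1) by apply: Kn_low; apply: (in_ideal_opp hvF).
  rewrite /Psi -hcomp //.
  transitivity (pi (mx22 0 1 (-1) 0 *m mx22 1 0 (-u) 1) Phi).
    by congr (pi _ Phi); apply: mx_comm.
  by rewrite hcomp // hfix.
have ePsi := hpi_w Phi hPhi.
have gamma0 : gamma != 0 by apply/eqP => e; move: hgamma; rewrite e normr0 => /eqP; rewrite eq_sym oner_eq0.
have supp : forall y, fourier I tau trF Phi y != 0 -> in_ideal vL (c - n) y.
  move=> y hy.
  case: (eqVneq y 0) => [->|y0]; first by left.
  have : Psi (sigma y) != 0 by rewrite /Psi ePsi sigK mulf_neq0.
  move/(P1 Psi hPsi hfixPsi) => [e|h].
    by move: y0; rewrite -(sigK y) e rmorph0 eqxx.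
  by right; rewrite -(vL_sigma hL hram _ y0).
move=> x h hh.
have eP z : Phi z = fourier I tau trF (fourier I tau trF Phi) (- z).
  by rewrite hselfdual ?opprK //; case: hPhi.
rewrite !eP /fourier; congr (I _); apply: functional_extensionality => y.
case: (eqVneq (fourier I tau trF Phi y) 0) => [e|hy].
  by rewrite /fourier in e; rewrite e !mul0r.
congr (_ * _).
rewrite opprD mulrDl (tr_add hL) tauD.
have -> : tau (trF (- h * y)) = 1.
  apply: tau1; apply: (tr_ideal hL hvF hram).
  have := in_ideal_mul hvL (in_ideal_opp hvL hh) (supp y hy).
  by have -> : c + n - 1 + (c - n) = 2%:Z * c - 1 by lia.
by rewrite mulr1.
Qed.
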